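(* Consider $n\ge 2$ unit-speed aircraft with positions $p_i\in\mathbb{R}^2$ and headings $\psi_i\in(-\pi,\pi]$ obeying $\dot p_i=(\cos\psi_i,\sin\psi_i)^T$, $\dot\psi_i=u_{\psi_i}$, $i\in\{1,\dots,n\}$. Let $\mathbb{G}=(\mathcal{V},\mathcal{E})$ be a connected graph on $\mathcal{V}=\{1,\dots,n\}$ with incidence matrix $B$, and assume $\mathbb{G}$ does not contain any cycles. Fix $r>0$, desired angles $z_k^*\in\mathbb{S}^1$ for $k\in\{1,\dots,|\mathcal{E}|\}$, and a gain $k_r>0$ with $r-\pi k_r\max_{i\in\mathcal{V}}|\mathcal{N}_i|>0$. Let $\theta_i=\operatorname{atan2}(p_{i,y},p_{i,x})$ be the angle of vehicle $i$ about the origin, $\theta=(\theta_1,\dots,\theta_n)^T$, $z=B^T\theta$, and let the formation error $e_\theta\in\mathbb{T}^{|\mathcal{E}|}$ have components $e_{\theta_k}=z_k-z_k^*\in\mathbb{S}^1$, represented in $(-\pi,\pi]$. Each vehicle $i$ uses the control $^iu_r=k_rB_ie_\theta$ (where $B_i$ is the $i$-th row of $B$), sets $^ic={^iu_r}^2+2r\,{^iu_r}$, and tracks the curve $^i\mathcal{C}=\{p:\varphi(p)={^ic}\}$ (equivalently the circle of radius $r+{^iu_r}$ centered at the origin), with $\varphi(p)=p_x^2+p_y^2-r^2$, by employing the guidance steering law described in the context. Assume (Assumption 1) that each vehicle $i$ is always tracking and traveling over $^i\mathcal{C}$, so that its angular velocity about the origin is $\dot\theta_i=1/(r+{^iu_r})=1/(r+k_rB_ie_\theta)$.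 Then the origin $e_\theta=0$ of the error dynamics is locally exponentially stable.
   Context: $\mathcal{N}_i=\{j\in\mathcal{V}:(i,j)\in\mathcal{E}\}$ is the neighbor set of vehicle $i$. Edges are ordered pairs $\mathcal{E}_k=(\mathcal{E}_k^{\text{tail}},\mathcal{E}_k^{\text{head}})$; the incidence matrix $B\in\mathbb{R}^{|\mathcal{V}|\times|\mathcal{E}|}$ has entries $b_{ik}=+1$ if $i=\mathcal{E}_k^{\text{tail}}$, $-1$ if $i=\mathcal{E}_k^{\text{head}}$, $0$ otherwise. A cycle is a path (sequence of vertices with consecutive ones adjacent) starting and ending at the same vertex; connected means any two vertices are joined by a path. $\mathbb{S}^1$ is the circle group and $\mathbb{T}^m$ the $m$-torus. Guidance law: for a curve given as a level set $\{\varphi(p)=c\}$, with error $e(p)=\varphi(p)-c$, normal $n(p)=\nabla\varphi(p)$, tangent $\tau(p)=En(p)$ with $E=\begin{bmatrix}0&1\\-1&0\end{bmatrix}$, the guidance vector field is $\dot p_d=\tau-k_e e\,n$ with $k_e>0$, and the steering input is $u_\psi=-\left(E\hat{\dot p}_d\hat{\dot p}_d^TE\left((E-k_ee)H(\varphi)\dot p-k_e n^T\dot p\, n\right)\right)^TE\frac{\dot p_d}{\|\dot p_d\|^2}+k_d\hat{\dot p}^TE\hat{\dot p}_d$ with $k_d>0$, where $H$ is the Hessian and $\hat x$ denotes $x/\|x\|$. *)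

(* Defs.v *)
From HB Require Import structures.
From mathcomp Require Import all_boot all_order all_algebra.
From mathcomp Require Import all_classical all_reals all_analysis.
Set Implicit Arguments. Unset Strict Implicit. Unset Printing Implicit Defensive.
Import Order.TTheory GRing.Theory Num.Theory.
Local Open Scope ring_scope.

Section Graphs.
Variables (n m : nat) (E : 'I_m -> 'I_n * 'I_n).

Definition joins (k : 'I_m) (v u : 'I_n) : bool :=
  (E k == (v, u)) || (E k == (u, v)).

Definition adjacent (i j : 'I_n) : bool := [exists k, joins k i j].

Definition neighbors (i : 'I_n) : {set 'I_n} := [set j | adjacent i j].
Definition max_degree : nat := \max_(i : 'I_n) #|neighbors i|.

Definition graph_connected : Prop :=
  forall i j : 'I_n, exists s : seq 'I_n, path adjacent i s && (last i s == j).

(* walk starting at v, given as a list of (edge used, vertex reached) *)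
Fixpoint walk_from (v : 'I_n) (w : seq ('I_m * 'I_n)) : bool :=
  if w is (k, u) :: w' then joins k v u && walk_from u w' else true.

Definition has_cycle : Prop :=
  exists (v0 : 'I_n) (w : seq ('I_m * 'I_n)),
    [/\ w != [::], uniq (map fst w), walk_from v0 w & last v0 (map snd w) == v0].

Definition incidence (R : numDomainType) : 'M[R]_(n, m) :=
  \matrix_(i, k) (if i == (E k).1 then 1 else if i == (E k).2 then -1 else 0).
End Graphs.

(* representative of an angle in (-pi, pi] *)
Definition wrap_angle (R : realType) (x : R) : R :=
  x - 2 * pi * (Num.ceil ((x - pi) / (2 * pi)))%:~R.

Definition formation_error (R : realType) (n m : nat) (B : 'M[R]_(n, m))
  (zs : 'I_m -> R) (th : 'I_n -> R) (k : 'I_m) : R :=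
  wrap_angle (\sum_(j < n) B j k * th j - zs k).

Definition enorm (R : realType) (m : nat) (e : 'I_m -> R) : R :=
  Num.sqrt (\sum_(k < m) e k ^+ 2).

(* Main.v *)
Require Import Defs.
From HB Require Import structures.
From mathcomp Require Import all_boot all_order all_algebra.
From mathcomp Require Import all_classical all_reals all_analysis.
From mathcomp Require Import ring lra.
Import Order.TTheory GRing.Theory Num.Theory.
Import numFieldNormedType.Exports.
Local Open Scope ring_scope.
Local Open Scope classical_set_scope.

Section Barrier.
Variable R : realType.

Lemma W_step (V dV : R -> R) (L d a b : R) :
  0 <= a -> a <= b ->
  {within `[0, +oo[, continuous (fun t : R => V t * expR (L * t))} ->
  (forall t : R, 0 < t -> is_derive t 1 V (dV t)) ->
  (forall t : R, 0 < t -> V t < d -> dV t <= - L * V t) ->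
  (forall t : R, a < t < b -> V t < d) ->
  V b * expR (L * b) <= V a * expR (L * a).
Proof.
move=> a0 ab Wc dVd dVle Vlt.
case: (ltgtP a b) ab => // [altb _|-> _]; last by [].
have dW : forall t : R, t \in `]a, b[%R -> is_derive t 1 (fun t : R => V t * expR (L * t))
   (dV t * expR (L * t) + V t * (L * expR (L * t))).
  move=> t; rewrite in_itv /= => /andP[hat htb].
  have t0 : 0 < t by apply: le_lt_trans hat.
  have := dVd t t0 => hV.
  apply: is_derive_eq.
  by rewrite /GRing.scale /= mulr1; ring.
have Wab : {within `[a, b], continuous (fun t : R => V t * expR (L * t))}.
  apply: continuous_subspaceW Wc => x /=; rewrite !in_itv /= => /andP[+ _].
  by rewrite andbT; apply: le_trans.
have [c hc heq] := MVT altb dW Wab.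
rewrite -subr_le0; move: heq => /= ->.
move: (hc); rewrite in_itv /= => /andP[hac hcb].
have c0 : 0 < c by apply: le_lt_trans hac.
apply: mulr_le0_ge0; last by rewrite subr_ge0 ltW.
have := dVle c c0 (Vlt c (introT andP (conj hac hcb))).
have := expR_gt0 (L * c); set E := expR _ => E0 h.
have -> : dV c * E + V c * (L * E) = E * (dV c + L * V c) by ring.
apply: mulr_ge0_le0; first exact: ltW.
by move: h; rewrite mulNr; lra.
Qed.

Lemma expL_cont (L : R) : continuous (fun t : R => expR (L * t)).
Proof.
move=> x; apply: (@continuous_comp _ _ _ (fun t : R => L * t) expR).
  by apply: continuousM; [exact: cvg_cst | exact: cvg_id].
exact: continuous_expR.
Qed.

Lemma barrier (V dV : R -> R) (L d : R) :
  {within `[0, +oo[, continuous V} ->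
  (forall t : R, 0 < t -> is_derive t 1 V (dV t)) ->
  (forall t : R, 0 < t -> V t < d -> dV t <= - L * V t) ->
  (forall t : R, 0 <= V t) -> V 0 < d -> 0 <= L ->
  forall t : R, 0 <= t -> V t < d /\ V t * expR (L * t) <= V 0.
Proof.
move=> Vc dVd dVle V0 Vd L0.
have Wc : {within `[0, +oo[, continuous (fun t : R => V t * expR (L * t))}.
  have [Vin Vr] := (continuous_within_itvcyP 0 V).1 Vc.
  apply/continuous_within_itvcyP; split.
    move=> x; rewrite in_itv /= andbT => x0.
    have := dVd x x0 => hV.
    have hW : derivable (fun t : R => V t * expR (L * t)) x 1.
      apply: ex_derive.
    by apply/differentiable_continuous/derivable1_diffP.
  apply: cvgM; first exact: Vr.
  exact: (cvg_at_right_filter (expL_cont L 0)).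
have key : forall t : R, 0 <= t -> V t < d.
  move=> t1 t10; apply: contrapT => /negP; rewrite -leNgt => dV1.
  pose S := [set t : R | 0 <= t /\ d <= V t].
  have S0 : S !=set0 by exists t1.
  have Slb : has_lbound S by exists 0 => x [].
  set t2 := inf S.
  have t20 : 0 <= t2 by apply: lb_le_inf => // x [].
  have below : forall t : R, 0 <= t < t2 -> V t < d.
    move=> t /andP[ht0 ht2]; rewrite ltNge; apply/negP => hd.
    have := ge_inf Slb (conj ht0 hd); rewrite -/t2 => h.
    by move: ht2; rewrite ltNge h.
  have Wt2 : V t2 * expR (L * t2) <= V 0 * expR (L * 0).
    apply: (@W_step V dV L d 0 t2) => //.
    by move=> t /andP[ht0 ht2]; apply: below; rewrite ht2 ltW.
  have Vt2 : V t2 < d.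
    apply: le_lt_trans Vd.
    apply: le_trans (_ : V t2 * expR (L * t2) <= _); last first.
      by move: Wt2; rewrite mulr0 expR0 mulr1.
    rewrite ler_peMr //; rewrite -expR0 ler_expR; exact: mulr_ge0.
  have [Vin Vr] := (continuous_within_itvcyP 0 V).1 Vc.
  have Hnear : \forall x \near t2^'+, V x < d.
    apply: (@cvgr_lt _ _ _ _ _ (V t2)) => //.
    case: (ltgtP 0 t2) t20 => // [t2p _|<- _]; last exact: Vr.
    by apply: cvg_at_right_filter; apply: Vin; rewrite in_itv /= andbT.
  apply: ((not_near_at_rightP t2 (fun x => V x < d)).2 _ Hnear) => e.
  have : inf S < t2 + e%:num by rewrite ltrDl.
  move=> /(inf_lt S0) [s [s0 ds] hs].
  have ts : t2 <= s := ge_inf Slb (conj s0 ds).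
  case: (ltgtP t2 s) ts => // [lts _|eqs _]; last by move: ds; rewrite -eqs leNgt Vt2.
  by exists s; [rewrite lts hs | apply/negP; rewrite /= -leNgt].
move=> t t0; split; first exact: key.
have := @W_step V dV L d 0 t (lexx 0) t0 Wc dVd dVle.
rewrite mulr0 expR0 mulr1; apply => s /andP[s0 st].
by apply: key; rewrite ltW.
Qed.
End Barrier.

Lemma wrap_eq (R : realType) (x : R) (N : int) :
  - pi < x - 2 * pi * N%:~R <= pi -> wrap_angle x = x - 2 * pi * N%:~R.
Proof.
move=> /andP[h1 h2]; rewrite /wrap_angle (@ceil_def _ _ N) //.
have p0 : (0 : R) < pi := pi_gt0 R.
have p2 : (0 : R) < 2 * pi by rewrite mulr_gt0.
rewrite ltr_pdivlMr // ler_pdivrMr // intrB.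
apply/andP; split; nra.
Qed.

Section Comb.
Variables (n m : nat) (E : 'I_m -> 'I_n * 'I_n).

Lemma walk_from_cat v w1 w2 : walk_from E v (w1 ++ w2) =
  walk_from E v w1 && walk_from E (last v (map snd w1)) w2.
Proof.
elim: w1 v => [|[k u] w1 IH] v //=.
by rewrite IH andbA.
Qed.

Lemma no_loop : ~ has_cycle E -> forall k, (E k).1 != (E k).2.
Proof.
move=> nc k; apply/negP => /eqP h; apply: nc.
exists (E k).1, [:: (k, (E k).1)]; split => //=.
by rewrite andbT /joins {2}h -surjective_pairing eqxx.
Qed.

Definition endp (k : 'I_m) (u : 'I_n) := (u == (E k).1) || (u == (E k).2).

Lemma joins_endp k x u : joins E k x u -> endp k u /\ endp k x.
Proof.
by rewrite /joins /endp => /orP[] /eqP -> /=; rewrite !eqxx ?orbT.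
Qed.

Lemma joins_other k u : endp k u ->
  joins E k u (if u == (E k).1 then (E k).2 else (E k).1).
Proof.
rewrite /endp /joins; case: eqP => [->|_] /= h.
  by rewrite -surjective_pairing eqxx.
by rewrite (eqP h) -surjective_pairing eqxx orbT.
Qed.

Lemma endp_joins k y x u : joins E k y x -> endp k u -> (u == y) || (u == x).
Proof.
by rewrite /joins /endp => /orP[] /eqP -> //=; rewrite orbC.
Qed.

Variable R : realType.

Lemma inc_E (i : 'I_n) k : incidence E R i k =
  if i == (E k).1 then 1 else if i == (E k).2 then -1 else 0.
Proof. by rewrite mxE. Qed.

Lemma ker_trivial : ~ has_cycle E -> forall e : 'I_m -> R,
  (forall i, \sum_k incidence E R i k * e k = 0) -> forall k, e k = 0.
Proof.
move=> nc e he.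
have deg2 : forall u k, e k != 0 -> endp k u ->
    exists k', [/\ k' != k, e k' != 0 & endp k' u].
  move=> u k ek eu; apply: contrapT => hn.
  have : \sum_k0 incidence E R u k0 * e k0 = incidence E R u k * e k.
    rewrite (bigD1 k) //= big1 ?addr0 // => k' hk'.
    case: (eqVneq (e k') 0) => [->|ek']; first by rewrite mulr0.
    case: (boolP (endp k' u)) => [eu'|]; first by exfalso; apply: hn; exists k'.
    rewrite inc_E /endp negb_or => /andP[/negbTE -> /negbTE ->]; by rewrite mul0r.
  rewrite he => /esym /eqP; rewrite mulf_eq0 (negbTE ek) orbF inc_E.
  move: eu; rewrite /endp; case: (u == (E k).1) => /=; first by rewrite oner_eq0.
  by move=> ->; rewrite oppr_eq0 oner_eq0.
apply: contrapT => /existsNP [k0 /eqP ek0].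
pose trail v w := [&& walk_from E v w, uniq (map fst w) & all (fun p => e p.1 != 0) w].
have ext : forall N, exists v w, trail v w /\ size w = N.+1.
  elim => [|N [v [w [tw sw]]]].
    exists (E k0).1, [:: (k0, (E k0).2)]; split => //.
    by rewrite /trail /= /joins -surjective_pairing eqxx ek0.
  case/and3P: tw => ww uw aw.
  have : exists w' p, w = rcons w' p.
    clear -sw; case/lastP: w sw => [|w' p] //; by exists w', p.
  move=> [w' [[k u] Ew]].
  have Hu : last v (map snd w) = u by rewrite Ew map_rcons last_rcons.
  have ek : e k != 0 by move: aw; rewrite Ew all_rcons => /andP[].
  have euk : endp k u.
    move: ww; rewrite Ew -cats1 walk_from_cat /= andbT => /andP[_].
    by case/joins_endp.
  have [k' [kk' ek' euk']] := deg2 u k ek euk.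
  case: (boolP (k' \in map fst w)) => [kin|knin]; last first.
    exists v, (rcons w (k', if u == (E k').1 then (E k').2 else (E k').1)).
    split; last by rewrite size_rcons sw.
    apply/and3P; split.
    - by rewrite -cats1 walk_from_cat ww Hu /= andbT joins_other.
    - by rewrite map_rcons rcons_uniq knin uw.
    - by rewrite all_rcons aw andbT.
  exfalso; apply: nc.
  case/mapP: kin => [[k'' x] px /= Ek'']; rewrite -{k''}Ek'' in px.
  move: px Ew Hu ww uw; case/splitPr => w1 w2 Ew Hu ww uw.
  move: ww; rewrite walk_from_cat /= => /and3P[_ jk wx].
  have Hu2 : last x (map snd w2) = u by rewrite -Hu map_cat last_cat.
  have uw2 : uniq (map fst ((k', x) :: w2)).
    by move: uw; rewrite map_cat cat_uniq => /and3P[_ _].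
  case/orP: (endp_joins _ _ _ _ jk euk') => /eqP hu.
    exists (last v (map snd w1)), ((k', x) :: w2); split => //=; rewrite ?jk ?wx ?Hu2 ?hu //.
  exists x, w2; split => //.
  - apply/eqP => w20; move: Ew; rewrite w20 cats1 => /rcons_inj [_ [hk _]].
    by move: kk'; rewrite hk eqxx.
  - by move: uw2 => /= /andP[].
  - by rewrite Hu2 hu.
have [v [w [tw sw]]] := ext m.
move: tw => /and3P[_ uw _].
have := card_uniqP uw; rewrite size_map sw => hc.
have := max_card (mem (map fst w)); rewrite hc card_ord ltnn.
done.
Qed.
End Comb.

Lemma coercive (R : realType) n m (A : 'M[R]_(n,m)) :
  (forall e : 'I_m -> R, (forall i, \sum_k A i k * e k = 0) -> forall k, e k = 0) ->
  exists mu : R, 0 < mu /\ forall e : 'I_m -> R,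
    mu * \sum_k e k ^+ 2 <= \sum_i (\sum_k A i k * e k) ^+ 2.
Proof.
move=> inj.
have rf : row_free A^T.
  rewrite -kermx_eq0; apply/rowV0P => v /sub_kermxP hv.
  apply/rowP => k; rewrite mxE; apply: (inj (fun k => v 0 k)) => i.
  have h := congr1 (fun N : 'rV[R]_n => N 0 i) hv; rewrite /= !mxE in h.
  by rewrite -[RHS]h; apply: eq_bigr => k' _; rewrite mxE mulrC.
have [M hM] := row_freeP rf.
pose K := \sum_k (\sum_j `|M j k|) ^+ 2.
have K0 : 0 <= K by apply: sumr_ge0 => k _; apply: sqr_ge0.
exists (K + 1)^-1; split; first by rewrite invr_gt0; apply: ltr_wpDl.
move=> e.
set Y := \sum_i (\sum_k A i k * e k) ^+ 2.
have Y0 : 0 <= Y by apply: sumr_ge0 => i _; apply: sqr_ge0.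
pose u : 'rV[R]_m := \row_k e k.
have ye : forall k, e k = \sum_j (\sum_k' A j k' * e k') * M j k.
  move=> k.
  have h := congr1 (fun N : 'M[R]_m => (u *m N) 0 k) hM.
  rewrite /= mulmxA mulmx1 [u 0 k]mxE in h.
  rewrite -{1}h mxE; apply: eq_bigr => j _; congr (_ * _).
  by rewrite !mxE; apply: eq_bigr => k' _; rewrite !mxE mulrC.
have yb : forall j, `|\sum_k' A j k' * e k'| <= Num.sqrt Y.
  move=> j; rewrite -sqrtr_sqr; apply: ler_wsqrtr.
  rewrite /Y (bigD1 j) //= lerDl; apply: sumr_ge0 => i _; apply: sqr_ge0.
have eb : forall k, e k ^+ 2 <= Y * (\sum_j `|M j k|) ^+ 2.
  move=> k.
  have h : `|e k| <= Num.sqrt Y * \sum_j `|M j k|.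
    rewrite ye mulr_sumr; apply: le_trans (ler_norm_sum _ _ _) _.
    apply: ler_sum => j _; rewrite normrM; apply: ler_wpM2r => //.
  rewrite -(real_normK (num_real (e k))).
  apply: le_trans (_ : (Num.sqrt Y * \sum_j `|M j k|) ^+ 2 <= _).
    have := normr_ge0 (e k); nra.
  by rewrite exprMn sqr_sqrtr.
have : \sum_k e k ^+ 2 <= Y * K.
  rewrite /K mulr_sumr; exact: ler_sum => k _.
move=> h; rewrite ler_pdivrMl ?ltr_wpDl //.
apply: le_trans h _; nra.
Qed.

Section Helpers.
Variable R : realType.

Lemma is_derive_sumf n (h : 'I_n -> R -> R) (x : R) (dh : 'I_n -> R) :
  (forall i, is_derive x 1 (h i) (dh i)) ->
  is_derive x 1 (fun t => \sum_i h i t) (\sum_i dh i).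
Proof.
move=> H; have := is_derive_sum H.
by rewrite fct_sumE.
Qed.

Lemma cvg_sumf (F : set_system R) (FF : Filter F) n (h : 'I_n -> R -> R) (l : 'I_n -> R) :
  (forall i, h i x @[x --> F] --> l i) ->
  (\sum_i h i x) @[x --> F] --> \sum_i l i.
Proof.
move=> H; rewrite -(fct_sumE _ _ h).
elim/big_ind2 : _ => //; first exact: cvg_cst.
by move=> f a g b hf hg; apply: cvgD.
Qed.

Lemma sq_deriv (f : R -> R) (x df : R) : is_derive x 1 f df ->
  is_derive x 1 (fun t => f t ^+ 2) (2 * f x * df).
Proof.
move=> H; apply: is_derive_eq.
by rewrite /GRing.scale /=; ring.
Qed.

Lemma sq_cvg (F : set_system R) (FF : Filter F) (f : R -> R) (l : R) :
  f x @[x --> F] --> l -> (f x ^+ 2) @[x --> F] --> l ^+ 2.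
Proof.
move=> H; have := cvgM H H; rewrite -expr2; exact.
Qed.
End Helpers.

Lemma term_bound (R : realType) (r kr y : R) : 0 < r -> 0 < kr ->
  `|kr * y| <= r / 2 ->
  y * (1 / (r + kr * y) - 1 / r) <= - (2 * kr / (3 * r ^+ 2)) * y ^+ 2.
Proof.
move=> r0 k0; rewrite ler_norml => /andP[h1 h2].
have s0 : 0 < r + kr * y by lra.
have -> : y * (1 / (r + kr * y) - 1 / r) = - (kr * y ^+ 2) / (r * (r + kr * y)).
  by field; apply/andP; split; rewrite gt_eqF.
have -> : - (2 * kr / (3 * r ^+ 2)) * y ^+ 2 = - (2 * kr * y ^+ 2) / (3 * r ^+ 2).
  by field; rewrite gt_eqF.
rewrite ler_pdivrMr ?mulr_gt0 // mulrAC ler_pdivlMr ?mulr_gt0 ?exprn_gt0 //.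
have P := mulr_ge0 (mulr_ge0 (ltW k0) (sqr_ge0 y)) (ltW r0).
have Q : 2 * (kr * y) - r <= 0 by lra.
have := mulr_ge0_le0 P Q; nra.
Qed.

Lemma deriv_bound (R : realType) n m (B : 'M[R]_(n,m)) (r kr mu : R) (et : 'I_m -> R) :
  0 < r -> 0 < kr -> (forall k, \sum_j B j k = 0) ->
  mu * \sum_k et k ^+ 2 <= \sum_j (\sum_k B j k * et k) ^+ 2 ->
  (forall j, `|kr * \sum_k B j k * et k| <= r / 2) ->
  \sum_k 2 * et k * (\sum_j B j k * (1 / (r + kr * \sum_k' B j k' * et k')))
    <= - (4 * kr * mu / (3 * r ^+ 2)) * \sum_k et k ^+ 2.
Proof.
move=> r0 k0 cs hmu hy.
set y := fun j => \sum_k B j k * et k.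
set f := fun j => 1 / (r + kr * y j).
have z : \sum_j y j * (1 / r) = 0.
  rewrite -mulr_suml /y exchange_big /=.
  rewrite (eq_bigr (fun k => et k * \sum_j B j k)); last first.
    by move=> k _; rewrite mulr_sumr; apply: eq_bigr => j _; rewrite mulrC.
  by rewrite big1 ?mul0r // => k _; rewrite cs mulr0.
have e1 : \sum_k 2 * et k * (\sum_j B j k * f j) = 2 * \sum_j y j * (f j - 1 / r).
  have -> : \sum_j y j * (f j - 1 / r) = \sum_j y j * f j - \sum_j y j * (1 / r).
    by rewrite -sumrB; apply: eq_bigr => j _; rewrite mulrBr.
  rewrite z subr0 mulr_sumr.
  under eq_bigr do rewrite mulr_sumr.
  rewrite exchange_big /=; apply: eq_bigr => j _.
  rewrite /y mulr_suml mulr_sumr; apply: eq_bigr => k _; ring.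
rewrite e1.
have c0 : 0 <= 2 * kr / (3 * r ^+ 2) by rewrite ltW // divr_gt0 ?mulr_gt0 ?exprn_gt0.
have : \sum_j y j * (f j - 1 / r) <= - (2 * kr / (3 * r ^+ 2)) * \sum_j y j ^+ 2.
  rewrite mulr_sumr; apply: ler_sum => j _.
  exact: (@term_bound _ r kr (y j) r0 k0 (hy j)).
have : (2 * kr / (3 * r ^+ 2)) * (mu * \sum_k et k ^+ 2) <= (2 * kr / (3 * r ^+ 2)) * \sum_j y j ^+ 2.
  exact: ler_wpM2l.
have -> : 4 * kr * mu / (3 * r ^+ 2) = 2 * (2 * kr / (3 * r ^+ 2)) * mu.
  by field; rewrite gt_eqF ?mulr_gt0 ?exprn_gt0.
set c := 2 * kr / (3 * r ^+ 2); set S1 := \sum_j _; set S2 := \sum_j _; set S3 := \sum_k _.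
move=> h1 h2; nra.
Qed.

Theorem theorem2 (R : realType) (n m : nat) (E : 'I_m -> 'I_n * 'I_n)
  (r kr : R) (zs : 'I_m -> R) :
  (2 <= n)%N ->
  graph_connected E ->
  ~ has_cycle E ->
  0 < r -> 0 < kr ->
  0 < r - pi * kr * (max_degree E)%:R ->
  let B : 'M[R]_(n, m) := @incidence n m E R in
  exists delta c lambda : R,
    [/\ 0 < delta, 0 < c, 0 < lambda &
      forall th : 'I_n -> R -> R,
        (forall i, th i x @[x --> (0:R)^'+] --> (th i 0 : R)) ->
        (forall i (t : R), 0 < t ->
           is_derive t 1 (th i)
             (1 / (r + kr * \sum_(k < m) B i k *
                     formation_error B zs (fun j => th j t) k))) ->
        enorm (formation_error B zs (fun j => th j 0)) < delta ->
        forall t : R, 0 <= t ->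
          enorm (formation_error B zs (fun j => th j t))
            <= c * enorm (formation_error B zs (fun j => th j 0))
                 * expR (- (lambda * t))].

Proof.
move=> n2 conn nc r0 kr0 hD B.
have nl := @no_loop n m E nc.
have BE : forall j k, B j k = if j == (E k).1 then 1 else if j == (E k).2 then -1 else 0.
  by move=> j k; rewrite /B mxE.
have cs : forall k, \sum_j B j k = 0.
  move=> k; rewrite (bigD1 (E k).1) //= (bigD1 (E k).2) 1?eq_sym //=.
  rewrite big1 ?addr0.
    by rewrite !BE eqxx eq_sym (negbTE (nl k)) eqxx subrr.
  move=> j /andP[h1 h2]; rewrite BE (negbTE h2) (negbTE h1) //.
have Bb : forall j k, `|B j k| <= 1.
  move=> j k; rewrite BE; case: ifP => _; first by rewrite normr1.
  by case: ifP => _; rewrite ?normrN ?normr1 ?normr0.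
have [mu [mu0 hmu]] := @coercive R n m B (@ker_trivial n m E R nc).
have pi0 : (0 : R) < pi := pi_gt0 R.
pose delta := Num.min pi (r / (2 * kr * (m%:R + 1))).
have d0 : 0 < delta.
  by rewrite lt_min pi0 /= divr_gt0 // !mulr_gt0 // ltr_wpDl.
have dpi : delta <= pi by rewrite ge_min lexx.
have dr : kr * (m%:R * delta) <= r / 2.
  have h : delta <= r / (2 * kr * (m%:R + 1)) by rewrite ge_min lexx orbT.
  have m0 : (0 : R) <= m%:R by [].
  rewrite ler_pdivlMr // in h; last by rewrite !mulr_gt0 // ltr_wpDl.
  nra.
pose L := 4 * kr * mu / (3 * r ^+ 2).
have L0 : 0 < L by rewrite /L divr_gt0 ?mulr_gt0 ?exprn_gt0.
exists delta, 1, (L / 2); split => //; first by rewrite divr_gt0.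
move=> th thc thd he0 t t0.
pose g k t := \sum_j B j k * th j t - zs k.
pose N k := Num.ceil ((g k 0 - pi) / (2 * pi)).
pose et k t := g k t - 2 * pi * (N k)%:~R.
pose V t := \sum_k et k t ^+ 2.
have E0 : forall k, formation_error B zs (fun j => th j 0) k = et k 0 by [].
have Vge0 : forall t, 0 <= V t by move=> t'; apply: sumr_ge0 => k _; apply: sqr_ge0.
have smallE : forall t k, V t < delta ^+ 2 ->
    formation_error B zs (fun j => th j t) k = et k t /\ `|et k t| < delta.
  move=> t' k Vt.
  have h : et k t' ^+ 2 <= V t'.
    rewrite /V (bigD1 k) //= lerDl; apply: sumr_ge0 => i _; apply: sqr_ge0.
  have hn : `|et k t'| < delta.
    have := normr_ge0 (et k t'); rewrite -(real_normK (num_real (et k t'))) in h.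
    nra.
  split => //.
  rewrite /formation_error (@wrap_eq R _ (N k)) //.
  move: hn; rewrite ltr_norml => /andP[h1 h2].
  rewrite /et /g in h1 h2; apply/andP; split; lra.
have en : forall t, V t < delta ^+ 2 ->
    enorm (formation_error B zs (fun j => th j t)) = Num.sqrt (V t).
  move=> t' Vt; rewrite /enorm /V; congr Num.sqrt; apply: eq_bigr => k _.
  by rewrite (smallE t' k Vt).1.
have en0 : enorm (formation_error B zs (fun j => th j 0)) = Num.sqrt (V 0).
  by rewrite /enorm /V; congr Num.sqrt; apply: eq_bigr => k _; rewrite E0.
have Vd : V 0 < delta ^+ 2.
  move: he0; rewrite en0 => h.
  rewrite -(sqr_sqrtr (Vge0 0)); have := sqrtr_ge0 (V 0); nra.
pose th' j t := 1 / (r + kr * \sum_k B j k * formation_error B zs (fun j0 => th j0 t) k).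
pose dVf t := \sum_k 2 * et k t * (\sum_j B j k * th' j t).
have dg : forall (t : R) k, 0 < t -> is_derive t 1 (et k) (\sum_j B j k * th' j t).
  move=> t' k tp.
  have hs : is_derive t' 1 (fun t => \sum_j B j k * th j t) (\sum_j B j k * th' j t').
    apply: is_derive_sumf => j.
    have := thd j t' tp => hj.
    by apply: is_derive_eq; rewrite /GRing.scale /=.
  by apply: is_derive_eq; rewrite subr0 subr0.
have dV : forall t : R, 0 < t -> is_derive t 1 V (dVf t).
  move=> t' tp; apply: is_derive_sumf => k; exact: sq_deriv (dg t' k tp).
have dVle : forall t : R, 0 < t -> V t < delta ^+ 2 -> dVf t <= - L * V t.
  move=> t' tp Vt.
  have th'E : forall j, th' j t' = 1 / (r + kr * \sum_k B j k * et k t').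
    move=> j; rewrite /th'; congr (1 / (r + kr * _)); apply: eq_bigr => k _.
    by rewrite (smallE t' k Vt).1.
  have -> : dVf t' = \sum_k 2 * et k t' * (\sum_j B j k * (1 / (r + kr * \sum_k0 B j k0 * et k0 t'))).
    apply: eq_bigr => k _; congr (_ * _); apply: eq_bigr => j _; by rewrite th'E.
  have hy : forall j, `|kr * \sum_k B j k * et k t'| <= r / 2.
    move=> j; rewrite normrM (gtr0_norm kr0); apply: le_trans dr.
    apply: ler_wpM2l; first exact: ltW.
    apply: le_trans (ler_norm_sum _ _ _) _.
    apply: le_trans (_ : \sum_(k < m) delta <= _).
      apply: ler_sum => k _; rewrite normrM.
      have := Bb j k; have := (smallE t' k Vt).2.
      have := normr_ge0 (B j k); have := normr_ge0 (et k t'); nra.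
    by rewrite sumr_const card_ord mulr_natl.
  exact: (@deriv_bound R n m B r kr mu (fun k => et k t') r0 kr0 cs (hmu _) hy).
have Vc : {within `[0, +oo[, continuous V}.
  apply/continuous_within_itvcyP; split.
    move=> x; rewrite in_itv /= andbT => x0.
    have := dV x x0 => hV.
    have hd : derivable V x 1 by apply: ex_derive.
    by apply/differentiable_continuous/derivable1_diffP.
  apply: cvg_sumf => k.
  have h := @sq_cvg R _ (at_right_proper_filter (0:R)) (et k) (et k 0).
  apply: h.
  apply: cvgB; last exact: cvg_cst.
  apply: cvgB; last exact: cvg_cst.
  apply: cvg_sumf => j; apply: cvgM; [exact: cvg_cst | exact: thc].
have [Vlt Vexp] := @barrier R V dVf L (delta ^+ 2) Vc dV dVle Vge0 Vd (ltW L0) t t0.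
rewrite (en t Vlt) en0 mul1r.
have E2 : expR (- (L / 2 * t)) ^+ 2 = (expR (L * t))^-1.
  rewrite expr2 -expRD -expRN; congr expR.
  by rewrite -opprD -mulrDl -splitr.
have Vt' : V t <= V 0 * expR (- (L / 2 * t)) ^+ 2.
  by rewrite E2 ler_pdivlMr ?expR_gt0.
apply: le_trans (ler_wsqrtr Vt') _.
by rewrite sqrtrM ?Vge0 // sqrtr_sqr ger0_norm ?expR_ge0.
Qed.
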